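(* Let $(p_{ij})_{i,j\in\{0,1\}}$ be a transition matrix with all $p_{ij}\in(0,1)$ and $p_{ij}\ne\tfrac12$ for some $(i,j)$, and for $i\in\{0,1\}$, $n\in\mathbb N_0$ let $I_n^i$ be binomially $B(n,p_{i0})$ distributed. Let $(a_i(n))_{n\in\mathbb N_0}$, $(\varepsilon_i(n))_{n\in\mathbb N_0}$, $i\in\{0,1\}$, be real sequences satisfying $$a_i(n)=\mathbb E[a_0(I_n^i)]+\mathbb E[a_1(n-I_n^i)]+\varepsilon_i(n),\qquad i\in\{0,1\},\ n\in\mathbb N.$$ If $\varepsilon_i(n)=c_in+O(n^\alpha)$ for constants $c_0,c_1\in\mathbb R$, some $\alpha<1$ and both $i$, then as $n\to\infty$ $$a_i(n)=\frac{\pi_0c_0+\pi_1c_1}{H}n\log n+O(n),\qquad i\in\{0,1\}.$$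
   Context: $\pi_0=p_{10}/(p_{01}+p_{10})$, $\pi_1=p_{01}/(p_{01}+p_{10})$, $H_i=-\sum_{j}p_{ij}\log p_{ij}$, $H=\pi_0H_0+\pi_1H_1$. *)

(* Defs.v *)
From Stdlib Require Import Reals Lra.
Open Scope R_scope.

(* States {0,1} are encoded as bool: false = 0, true = 1. *)

Definition binom_exp (n : nat) (q : R) (f : nat -> R) : R :=
  sum_f_R0 (fun k => C n k * q ^ k * (1 - q) ^ (n - k) * f k) n.

Definition BigO (f g : nat -> R) : Prop :=
  exists K : R, exists N : nat, forall n : nat, (N <= n)%nat -> Rabs (f n) <= K * Rabs (g n).

Definition pi0 (p : bool -> bool -> R) : R := p true false / (p false true + p true false).
Definition pi1 (p : bool -> bool -> R) : R := p false true / (p false true + p true false).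
Definition Hrow (p : bool -> bool -> R) (i : bool) : R :=
  - (p i false * ln (p i false) + p i true * ln (p i true)).
Definition Hent (p : bool -> bool -> R) : R := pi0 p * Hrow p false + pi1 p * Hrow p true.

(* Main.v *)
Require Import Defs.
From Stdlib Require Import Reals Lra Lia.
Open Scope R_scope.

Lemma ln_le_sub1 t : 0 < t -> ln t <= t - 1.
Proof. intro Ht. pose proof (exp_ineq1_le (ln t)). rewrite exp_ln in H; lra. Qed.

Lemma C_nonneg n k : 0 <= C n k.
Proof.
  unfold C. apply Rmult_le_pos. left; apply INR_fact_lt_0.
  left; apply Rinv_0_lt_compat, Rmult_lt_0_compat; apply INR_fact_lt_0.
Qed.

Definition w n q k := C n k * q ^ k * (1 - q) ^ (n - k).

Lemma w_nonneg n q k : 0 <= q <= 1 -> 0 <= w n q k.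
Proof.
  intro H. unfold w. apply Rmult_le_pos; [apply Rmult_le_pos; [apply C_nonneg|]|]; apply pow_le; lra.
Qed.

Lemma be_w n q f : binom_exp n q f = sum_f_R0 (fun k => w n q k * f k) n.
Proof. reflexivity. Qed.

Lemma be_ext n q f g : (forall k, (k <= n)%nat -> f k = g k) -> binom_exp n q f = binom_exp n q g.
Proof. intro H. unfold binom_exp. apply sum_eq. intros i Hi. rewrite H; auto. Qed.

Lemma be_plus n q f g : binom_exp n q (fun k => f k + g k) = binom_exp n q f + binom_exp n q g.
Proof. unfold binom_exp. rewrite <- plus_sum. apply sum_eq. intros; ring. Qed.

Lemma be_scal n q a f : binom_exp n q (fun k => a * f k) = a * binom_exp n q f.
Proof. unfold binom_exp. rewrite scal_sum. apply sum_eq. intros; ring. Qed.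

Lemma be_const n q a : binom_exp n q (fun _ => a) = a.
Proof.
  unfold binom_exp. transitivity (a * (q + (1 - q)) ^ n).
  2:{ replace (q + (1-q)) with 1 by ring; rewrite pow1; ring. }
  rewrite binomial, scal_sum. apply sum_eq. intros; ring.
Qed.

Lemma be_mono n q f g : 0 <= q <= 1 -> (forall k, (k <= n)%nat -> f k <= g k) ->
  binom_exp n q f <= binom_exp n q g.
Proof.
  intros Hq H. unfold binom_exp. apply sum_Rle. intros i Hi.
  apply Rmult_le_compat_l. fold (w n q i). apply w_nonneg; auto. auto.
Qed.

Lemma be_abs n q f : 0 <= q <= 1 -> Rabs (binom_exp n q f) <= binom_exp n q (fun k => Rabs (f k)).
Proof.
  intros Hq. apply Rabs_le. split.
  - replace (- binom_exp n q (fun k => Rabs (f k))) with (binom_exp n q (fun k => -1 * Rabs (f k)))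
      by (rewrite be_scal; ring).
    apply be_mono; auto. intros k _. pose proof (Rle_abs (- f k)). rewrite Rabs_Ropp in H. lra.
  - apply be_mono; auto. intros; apply Rle_abs.
Qed.

Lemma sum_rev (h : nat -> R) n : sum_f_R0 (fun k => h (n - k)%nat) n = sum_f_R0 h n.
Proof.
  induction n.
  - reflexivity.
  - rewrite decomp_sum by lia. simpl pred. rewrite tech5.
    replace (sum_f_R0 (fun i => h (S n - S i)%nat) n) with (sum_f_R0 (fun k => h (n - k)%nat) n)
      by (apply sum_eq; intros; f_equal).
    rewrite IHn. replace (S n - 0)%nat with (S n) by lia. ring.
Qed.

Lemma be_refl n q f : binom_exp n q (fun k => f (n - k)%nat) = binom_exp n (1 - q) f.
Proof.
  unfold binom_exp. rewrite <- (sum_rev (fun k => C n k * (1 - q) ^ k * (1 - (1 - q)) ^ (n - k) * f k)).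
  apply sum_eq. intros i Hi. rewrite (pascal_step1 n i Hi).
  replace (n - (n - i))%nat with i by lia. replace (1 - (1 - q)) with q by ring. ring.
Qed.

Lemma C_shift m j : (j <= m)%nat -> C (S m) (S j) * INR (S j) = INR (S m) * C m j.
Proof.
  intro H. unfold C. replace (S m - S j)%nat with (m - j)%nat by lia.
  change (Factorial.fact (S m)) with (S m * Factorial.fact m)%nat.
  change (Factorial.fact (S j)) with (S j * Factorial.fact j)%nat.
  rewrite !mult_INR. pose proof (INR_fact_lt_0 m). pose proof (INR_fact_lt_0 j).
  pose proof (INR_fact_lt_0 (m - j)). pose proof (pos_INR j).
  field. repeat split; try lra. rewrite S_INR; lra.
Qed.

Lemma be_sizebias m q g : binom_exp (S m) q (fun k => INR k * g k) =
  INR (S m) * q * binom_exp m q (fun j => g (S j)).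
Proof.
  unfold binom_exp. rewrite decomp_sum by lia. simpl pred.
  rewrite scal_sum. simpl INR at 1. rewrite Rmult_0_l, Rmult_0_r, Rplus_0_l.
  apply sum_eq. intros i Hi. replace (S m - S i)%nat with (m - i)%nat by lia.
  replace (C (S m) (S i) * q ^ S i * (1 - q) ^ (m - i) * (INR (S i) * g (S i)))
    with ((C (S m) (S i) * INR (S i)) * q ^ S i * (1 - q) ^ (m - i) * g (S i)) by ring.
  rewrite C_shift by auto. simpl. ring.
Qed.

Lemma be_mean n q : binom_exp n q INR = INR n * q.
Proof.
  destruct n as [|m].
  - unfold binom_exp. simpl. ring.
  - transitivity (binom_exp (S m) q (fun k => INR k * 1)).
    + apply be_ext; intros; ring.
    + rewrite be_sizebias, be_const. ring.
Qed.

Lemma be_lin_lower n q f a b : 0 <= q <= 1 -> (forall k, (k <= n)%nat -> a + b * INR k <= f k) ->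
  a + b * (INR n * q) <= binom_exp n q f.
Proof.
  intros Hq H. rewrite <- be_mean, <- be_scal, <- (be_const n q a), <- be_plus.
  apply be_mono; auto.
Qed.

Lemma be_lin_upper n q f a b : 0 <= q <= 1 -> (forall k, (k <= n)%nat -> f k <= a + b * INR k) ->
  binom_exp n q f <= a + b * (INR n * q).
Proof.
  intros Hq H. rewrite <- be_mean, <- be_scal, <- (be_const n q a), <- be_plus.
  apply be_mono; auto.
Qed.

Lemma be_ind n q : binom_exp n q (fun k => if Nat.eqb k n then 1 else 0) = q ^ n.
Proof.
  unfold binom_exp. destruct n as [|m].
  - simpl. unfold C. simpl. replace (1*1) with 1 by ring. unfold Rdiv. rewrite Rinv_1. ring.
  - rewrite tech5. rewrite Nat.eqb_refl.
    rewrite (sum_eq _ (fun _ => 0)).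
    + assert (HC: C (S m) (S m) = 1) by (unfold C; rewrite Nat.sub_diag;
        change (Factorial.fact 0) with 1%nat; simpl (INR 1); field; apply INR_fact_neq_0).
      rewrite sum_cte, Nat.sub_diag, HC. ring.
    + intros i Hi. destruct (Nat.eqb_spec i (S m)); [lia|ring].
Qed.

Lemma ln_le_w a b : 0 < a -> a <= b -> ln a <= ln b.
Proof. intros Ha Hb. destruct Hb. left; apply ln_increasing; auto. subst; lra. Qed.

Lemma exp_le_w a b : a <= b -> exp a <= exp b.
Proof. intros H. destruct H. left; apply exp_increasing; auto. subst; lra. Qed.

Lemma ln_diff a b : 0 < a -> 0 < b -> ln a - ln b <= a / b - 1.
Proof.
  intros Ha Hb. replace (ln a - ln b) with (ln (a / b)).
  - apply ln_le_sub1. apply Rdiv_lt_0_compat; auto.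
  - unfold Rdiv. rewrite ln_mult by (auto; apply Rinv_0_lt_compat; auto).
    rewrite ln_Rinv by auto. ring.
Qed.

Definition L (k : nat) : R := INR k * ln (INR k).

Lemma EL_lower n q : (1 <= n)%nat -> 0 < q < 1 ->
  (INR n * q) * ln (INR n * q) <= binom_exp n q L.
Proof.
  intros Hn Hq. set (x := INR n * q).
  assert (Hx : 0 < x) by (unfold x; apply Rmult_lt_0_compat; [apply lt_0_INR; lia|lra]).
  replace (x * ln x) with (- x + (1 + ln x) * x) by ring.
  apply be_lin_lower; [lra|]. intros k Hk. unfold L.
  destruct k as [|k].
  - simpl. nra.
  - assert (Hk0 : 0 < INR (S k)) by (apply lt_0_INR; lia).
    pose proof (ln_diff x (INR (S k)) Hx Hk0).
    assert (INR (S k) * (ln x - ln (INR (S k))) <= INR (S k) * (x / INR (S k) - 1))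
      by (apply Rmult_le_compat_l; lra).
    replace (INR (S k) * (x / INR (S k) - 1)) with (x - INR (S k)) in H0 by (field; lra).
    nra.
Qed.

Lemma EL_upper n q : (1 <= n)%nat -> 0 < q < 1 ->
  binom_exp n q L <= (INR n * q) * ln (INR n * q) + 1.
Proof.
  intros Hn Hq. destruct n as [|m]; [lia|].
  set (x := INR (S m) * q).
  assert (Hx : 0 < x) by (unfold x; apply Rmult_lt_0_compat; [apply lt_0_INR; lia|lra]).
  unfold L. rewrite be_sizebias. fold x.
  set (M := 1 + INR m * q).
  assert (HM : 0 < M) by (unfold M; pose proof (pos_INR m); nra).
  assert (HE : binom_exp m q (fun j => ln (INR (S j))) <= ln M).
  { replace (ln M) with ((ln M + (1 - M)/M) + (1/M) * (INR m * q)) by (unfold M in *; field; lra).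
    apply be_lin_upper; [lra|]. intros k Hk.
    assert (0 < INR (S k)) by (apply lt_0_INR; lia).
    pose proof (ln_diff (INR (S k)) M H HM). rewrite S_INR in *.
    replace ((INR k + 1) / M - 1) with ((1 - M)/M + 1/M * INR k) in H0 by (field; lra). lra. }
  assert (HM2 : M <= 1 + x) by (unfold M, x; rewrite S_INR; nra).
  pose proof (ln_le_w M (1 + x) HM HM2).
  pose proof (ln_diff (1 + x) x ltac:(lra) Hx).
  replace ((1 + x) / x - 1) with (/ x) in H0 by (field; lra).
  assert (x * ln (1 + x) <= x * ln x + 1).
  { assert (x * (ln (1+x) - ln x) <= x * / x) by (apply Rmult_le_compat_l; lra).
    rewrite Rinv_r in H1; lra. }
  assert (x * binom_exp m q (fun j => ln (INR (S j))) <= x * ln M) by (apply Rmult_le_compat_l; lra).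
  assert (x * ln M <= x * ln (1+x)) by (apply Rmult_le_compat_l; lra).
  lra.
Qed.

Definition psi (g : R) (k : nat) : R := INR k * Rpower (INR k) (g - 1).

Lemma Epsi_lower n q g : (1 <= n)%nat -> 0 < q < 1 -> 0 < g < 1 ->
  1 <= INR n * q -> Rpower (INR n * q) g - 1 <= binom_exp n q (psi g).
Proof.
  intros Hn Hq Hg Hx1. destruct n as [|m]; [lia|].
  set (x := INR (S m) * q) in *.
  assert (Hx : 0 < x) by lra.
  unfold psi. rewrite be_sizebias. fold x.
  set (M := 1 + INR m * q). set (s := 1 - g).
  assert (HM : 0 < M) by (unfold M; pose proof (pos_INR m); nra).
  set (RM := Rpower M (g - 1)).
  assert (HRM : 0 < RM) by (unfold RM, Rpower; apply exp_pos).
  assert (HE : RM <= binom_exp m q (fun j => Rpower (INR (S j)) (g - 1))).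
  { replace RM with ((RM * (1 + s - s / M)) + (- (RM * s / M)) * (INR m * q))
      by (unfold M, s in *; field; lra).
    apply be_lin_lower; [lra|]. intros k Hk.
    assert (Hy : 0 < INR (S k)) by (apply lt_0_INR; lia).
    pose proof (ln_diff (INR (S k)) M Hy HM).
    unfold RM, Rpower.
    replace ((g - 1) * ln (INR (S k))) with ((g-1) * ln M + (- s * (ln (INR (S k)) - ln M)))
      by (unfold s; ring).
    rewrite exp_plus. pose proof (exp_ineq1_le (- s * (ln (INR (S k)) - ln M))).
    pose proof (exp_pos ((g - 1) * ln M)).
    assert (exp ((g - 1) * ln M) * (1 - s * (INR (S k) / M - 1)) <=
            exp ((g - 1) * ln M) * exp (- s * (ln (INR (S k)) - ln M))).
    { apply Rmult_le_compat_l; [lra|]. assert (0 < s) by (unfold s; lra). nra. }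
    rewrite S_INR in *.
    replace (exp ((g - 1) * ln M) * (1 + s - s / M) + - (exp ((g - 1) * ln M) * s / M) * INR k)
      with (exp ((g - 1) * ln M) * (1 - s * ((INR k + 1) / M - 1))) by (field; lra).
    lra. }
  assert (HM2 : M <= 1 + x) by (unfold M, x; rewrite S_INR; nra).
  assert (HR2 : Rpower (1 + x) (g - 1) <= RM).
  { unfold RM, Rpower. apply exp_le_w. pose proof (ln_le_w M (1 + x) HM HM2). nra. }
  assert (x * Rpower (1 + x) (g - 1) <= x * binom_exp m q (fun j => Rpower (INR (S j)) (g - 1)))
    by (apply Rmult_le_compat_l; lra).
  enough (Rpower x g - 1 <= x * Rpower (1 + x) (g - 1)) by lra.
  set (u := ln x). set (v := ln (1 + x)).
  assert (Hu : 0 <= u) by (unfold u; rewrite <- ln_1; apply ln_le_w; lra).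
  assert (Huv : u - v <= 0) by (unfold u, v; pose proof (ln_le_w x (1+x) Hx ltac:(lra)); lra).
  assert (E1 : x * Rpower (1 + x) (g - 1) = exp (g * u) * exp ((1 - g) * (u - v))).
  { unfold Rpower. rewrite <- exp_plus. fold v. rewrite <- (exp_ln x) at 1 by lra. fold u.
    rewrite <- exp_plus. f_equal. ring. }
  assert (E2 : exp ((1 - g) * (u - v)) >= exp (u - v)) by (apply Rle_ge, exp_le_w; nra).
  assert (E3 : exp (u - v) = x / (1 + x)).
  { unfold Rminus. rewrite exp_plus. unfold u, v. rewrite exp_ln by lra. rewrite exp_Ropp, exp_ln by lra. reflexivity. }
  assert (E4 : exp (g * u) <= x) by (rewrite <- (exp_ln x) by lra; apply exp_le_w; fold u; nra).
  unfold Rpower at 1. rewrite Rmult_comm. fold u. rewrite E1.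
  pose proof (exp_pos (g * u)).
  assert (HH : exp (g * u) * exp (u - v) <= exp (g * u) * exp ((1 - g) * (u - v)))
    by (apply Rmult_le_compat_l; lra).
  rewrite E3 in HH.
  assert (exp (g * u) * (x / (1 + x)) = exp (g * u) - exp (g * u) / (1 + x)) by (field; lra).
  assert (exp (g * u) / (1 + x) <= 1).
  { apply (Rmult_le_reg_r (1 + x)); [lra|]. unfold Rdiv. rewrite Rmult_assoc, Rinv_l by lra. lra. }
  rewrite (Rmult_comm u g). lra.
Qed.

Lemma rho_lt1 q n : 0 < q < 1 -> (2 <= n)%nat -> q ^ n + (1 - q) ^ n < 1.
Proof.
  intros Hq Hn. destruct n as [|n]; [lia|]. simpl.
  pose proof (pow_lt_1_compat q n ltac:(lra) ltac:(lia)).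
  pose proof (pow_lt_1_compat (1-q) n ltac:(lra) ltac:(lia)). nra.
Qed.

Lemma step (e : bool -> nat -> R) (q : bool -> R) (g : nat -> R) (F : bool -> nat -> R) (E0 : R) (n : nat) :
  (forall i, 0 < q i < 1) -> (2 <= n)%nat -> 0 <= E0 ->
  (forall i, e i n = binom_exp n (q i) (e false) + binom_exp n (q i) (fun k => e true (n - k)%nat) + F i n) ->
  (forall j, Rabs (e j 0%nat) <= g 0%nat + E0) ->
  (forall k j, (1 <= k)%nat -> (k < n)%nat -> Rabs (e j k) <= g k) ->
  (forall i, binom_exp n (q i) g + binom_exp n (1 - q i) g + 2 * E0 + Rabs (F i n) <= g n) ->
  forall j, Rabs (e j n) <= g n.
Proof.
  intros Hq Hn HE0 Hrec H0 IH Hstep.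
  set (M := Rmax (Rabs (e false n)) (Rabs (e true n))).
  set (u := Rmax 0 (M - g n)).
  assert (Hu0 : 0 <= u) by apply Rmax_l.
  set (h := fun k => g k + E0 + u * (if Nat.eqb k n then 1 else 0)).
  assert (Hh : forall k j, (k <= n)%nat -> Rabs (e j k) <= h k).
  { intros k j Hk. unfold h. destruct (Nat.eqb_spec k n).
    - subst k. assert (Rabs (e j n) <= M) by (unfold M; destruct j; [apply Rmax_r|apply Rmax_l]).
      assert (M - g n <= u) by apply Rmax_r. lra.
    - destruct k as [|k].
      + specialize (H0 j). lra.
      + specialize (IH (S k) j ltac:(lia) ltac:(lia)). lra. }
  assert (Hb : forall i, Rabs (e i n) <= g n + u * ((q i) ^ n + (1 - q i) ^ n)).
  { intro i. specialize (Hq i). rewrite Hrec.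
    assert (Eh : forall r, 0 <= r <= 1 -> binom_exp n r h = binom_exp n r g + E0 + u * r ^ n).
    { intros r Hr. unfold h. rewrite be_plus, be_plus, be_const, be_scal, be_ind. ring. }
    pose proof (be_abs n (q i) (e false) ltac:(lra)).
    pose proof (be_abs n (q i) (fun k => e true (n - k)%nat) ltac:(lra)).
    assert (HM1 : binom_exp n (q i) (fun k => Rabs (e false k)) <= binom_exp n (q i) h)
      by (apply be_mono; [lra|]; intros; apply Hh; auto).
    assert (HM2 : binom_exp n (q i) (fun k => Rabs (e true (n - k)%nat)) <= binom_exp n (1 - q i) h).
    { rewrite <- be_refl. apply be_mono; [lra|]. intros; apply Hh; lia. }
    rewrite Eh in HM1 by lra. rewrite Eh in HM2 by lra. specialize (Hstep i).
    pose proof (Rabs_triang (binom_exp n (q i) (e false) + binom_exp n (q i) (fun k => e true (n - k)%nat)) (F i n)).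
    pose proof (Rabs_triang (binom_exp n (q i) (e false)) (binom_exp n (q i) (fun k => e true (n - k)%nat))).
    lra. }
  intro j.
  assert (Hr0 := rho_lt1 (q false) n (Hq false) Hn).
  assert (Hr1 := rho_lt1 (q true) n (Hq true) Hn).
  assert (HM : M <= g n + u * Rmax (q false ^ n + (1 - q false) ^ n) (q true ^ n + (1 - q true) ^ n)).
  { unfold M. apply Rmax_lub.
    - pose proof (Hb false). pose proof (Rmax_l (q false ^ n + (1 - q false) ^ n) (q true ^ n + (1 - q true) ^ n)). nra.
    - pose proof (Hb true). pose proof (Rmax_r (q false ^ n + (1 - q false) ^ n) (q true ^ n + (1 - q true) ^ n)). nra. }
  assert (Hrm : Rmax (q false ^ n + (1 - q false) ^ n) (q true ^ n + (1 - q true) ^ n) < 1)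
    by (apply Rmax_lub_lt; auto).
  assert (HMg : M <= g n).
  { destruct (Rle_lt_dec M (g n)) as [|Hlt]; auto.
    assert (u = M - g n) by (unfold u; apply Rmax_right; lra). nra. }
  assert (Rabs (e j n) <= M) by (unfold M; destruct j; [apply Rmax_r|apply Rmax_l]). lra.
Qed.

Lemma eventually_ge x : exists N, forall n, (N <= n)%nat -> x <= INR n.
Proof.
  destruct (INR_unbounded x) as [N HN]. exists N. intros n Hn. apply le_INR in Hn. lra.
Qed.

Lemma growth d T Ke b g : 0 < d -> 0 <= T -> 0 <= Ke -> 0 <= b -> b < g ->
  exists N, forall n, (N <= n)%nat -> T + Ke * Rpower (INR n) b <= d * Rpower (INR n) g.
Proof.
  intros Hd HT HK Hb Hg. set (X := (T + Ke) / d).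
  destruct (eventually_ge (Rmax 1 (exp (X / (g - b))))) as [N HN]. exists N. intros n Hn.
  specialize (HN n Hn). pose proof (Rmax_l 1 (exp (X / (g - b)))). pose proof (Rmax_r 1 (exp (X / (g - b)))).
  assert (Hn1 : 1 <= INR n) by lra.
  assert (Hln : X / (g - b) <= ln (INR n)).
  { rewrite <- (ln_exp (X / (g - b))). apply ln_le_w. apply exp_pos. lra. }
  assert (Hl0 : 0 <= ln (INR n)) by (rewrite <- ln_1; apply ln_le_w; lra).
  assert (H1 : X <= Rpower (INR n) (g - b)).
  { unfold Rpower. pose proof (exp_ineq1_le ((g - b) * ln (INR n))).
    assert (X <= (g - b) * ln (INR n)).
    { apply (Rmult_le_compat_l (g - b)) in Hln; [|lra].
      replace ((g - b) * (X / (g - b))) with X in Hln by (field; lra). lra. }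
    lra. }
  assert (H2 : 1 <= Rpower (INR n) b).
  { unfold Rpower. pose proof (exp_ineq1_le (b * ln (INR n))). nra. }
  replace (Rpower (INR n) g) with (Rpower (INR n) b * Rpower (INR n) (g - b)) by (rewrite <- Rpower_plus; f_equal; ring).
  assert (d * X = T + Ke) by (unfold X; field; lra).
  assert (Rpower (INR n) b * (d * X) <= d * (Rpower (INR n) b * Rpower (INR n) (g - b))).
  { replace (d * (Rpower (INR n) b * Rpower (INR n) (g - b))) with (Rpower (INR n) b * (d * Rpower (INR n) (g - b))) by ring.
    apply Rmult_le_compat_l; [lra|]. apply Rmult_le_compat_l; lra. }
  nra.
Qed.

Lemma base_bound (e : bool -> nat -> R) N : exists A, 0 <= A /\ forall k j, (k < N)%nat -> Rabs (e j k) <= A.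
Proof.
  induction N.
  - exists 0. split; [lra|]. intros; lia.
  - destruct IHN as [A [HA H]]. exists (Rmax A (Rabs (e false N) + Rabs (e true N))).
    split. { pose proof (Rmax_l A (Rabs (e false N) + Rabs (e true N))). lra. }
    intros k j Hk. destruct (Nat.eq_dec k N).
    + subst. pose proof (Rmax_r A (Rabs (e false N) + Rabs (e true N))).
      pose proof (Rabs_pos (e false N)). pose proof (Rabs_pos (e true N)). destruct j; lra.
    + pose proof (Rmax_l A (Rabs (e false N) + Rabs (e true N))). specialize (H k j ltac:(lia)). lra.
Qed.

Lemma Fcore n q : (1 <= n)%nat -> 0 < q < 1 ->
  0 <= binom_exp n q L + binom_exp n (1 - q) L - L n - INR n * (q * ln q + (1 - q) * ln (1 - q)) <= 2.
Proof.
  intros Hn Hq. pose proof (EL_lower n q Hn Hq). pose proof (EL_upper n q Hn Hq).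
  pose proof (EL_lower n (1 - q) Hn ltac:(lra)). pose proof (EL_upper n (1 - q) Hn ltac:(lra)).
  assert (Hn0 : 0 < INR n) by (apply lt_0_INR; lia).
  rewrite ln_mult in * by lra. unfold L.
  replace (INR n * q * (ln (INR n) + ln q) + INR n * (1 - q) * (ln (INR n) + ln (1 - q)))
    with (INR n * ln (INR n) + INR n * (q * ln q + (1 - q) * ln (1 - q))) in * by ring.
  unfold L in *. lra.
Qed.

Lemma psi_n g n : (1 <= n)%nat -> psi g n = Rpower (INR n) g.
Proof.
  intro Hn. unfold psi, Rpower. assert (0 < INR n) by (apply lt_0_INR; lia).
  rewrite <- (exp_ln (INR n)) at 1 by lra. rewrite <- exp_plus. f_equal. ring.
Qed.

Lemma psi_le g k : g <= 1 -> (1 <= k)%nat -> 0 <= psi g k <= INR k.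
Proof.
  intros Hg Hk. unfold psi, Rpower. assert (1 <= INR k) by (apply (le_INR 1); lia).
  assert (0 <= ln (INR k)) by (rewrite <- ln_1; apply ln_le_w; lra).
  assert (exp ((g - 1) * ln (INR k)) <= exp 0) by (apply exp_le_w; nra). rewrite exp_0 in H1.
  pose proof (exp_pos ((g - 1) * ln (INR k))). split; nra.
Qed.

Lemma be_lin3 n q f g h a b : binom_exp n q (fun k => f k - a * g k - b * h k) =
  binom_exp n q f - a * binom_exp n q g - b * binom_exp n q h.
Proof.
  transitivity (binom_exp n q (fun k => f k + ((-a) * g k + (-b) * h k))).
  - apply be_ext; intros; ring.
  - rewrite be_plus, be_plus, !be_scal. ring.
Qed.

Theorem lemma4p2
  (p : bool -> bool -> R)
  (Hp01 : forall i j, 0 < p i j < 1)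
  (Hstoch : forall i, p i false + p i true = 1)
  (Hnothalf : exists i j, p i j <> 1 / 2)
  (a eps : bool -> nat -> R)
  (Hrec : forall (i : bool) (n : nat), (1 <= n)%nat ->
     a i n = binom_exp n (p i false) (fun k => a false k)
           + binom_exp n (p i false) (fun k => a true (n - k)%nat)
           + eps i n)
  (c : bool -> R)
  (Heps : exists alpha : R, alpha < 1 /\
     forall i : bool, BigO (fun n => eps i n - c i * INR n) (fun n => Rpower (INR n) alpha)) :
  forall i : bool,
    BigO (fun n => a i n - (pi0 p * c false + pi1 p * c true) / Hent p * INR n * ln (INR n))
         (fun n => INR n).
Proof.
  intros i0.
  assert (Hq : forall i, 0 < p i false < 1) by (intro; apply Hp01).
  assert (Hpt : forall i, p i true = 1 - p i false) by (intro i; specialize (Hstoch i); lra).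
  assert (HH : forall i, Hrow p i = - (p i false * ln (p i false) + (1 - p i false) * ln (1 - p i false))).
  { intro i. unfold Hrow. rewrite Hpt. reflexivity. }
  assert (HHpos : forall i, 0 < Hrow p i).
  { intro i. rewrite HH. pose proof (Hq i).
    assert (ln (p i false) < 0) by (rewrite <- ln_1; apply ln_increasing; lra).
    assert (ln (1 - p i false) < 0) by (rewrite <- ln_1; apply ln_increasing; lra). nra. }
  set (K := (pi0 p * c false + pi1 p * c true) / Hent p).
  set (d0 := (c false - K * Hrow p false) / (1 - p false false)).
  assert (Hid0 : c false - K * Hrow p false + d0 * p false false - d0 = 0)
    by (unfold d0; pose proof (Hq false); field; lra).
  assert (Hid1 : c true - K * Hrow p true + d0 * p true false = 0).
  { pose proof (Hq false). pose proof (Hq true). pose proof (HHpos false). pose proof (HHpos true).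
    unfold d0, K, Hent, pi0, pi1. rewrite (Hpt false). field.
    repeat split; try lra. nra. }
  set (d := fun j : bool => if j then 0 else d0).
  set (e := fun j k => a j k - K * L k - d j * INR k).
  set (F := fun i n => (eps i n - c i * INR n) + K * (binom_exp n (p i false) L + binom_exp n (1 - p i false) L - L n
          - INR n * (p i false * ln (p i false) + (1 - p i false) * ln (1 - p i false)))).
  assert (Hrece : forall i n, (1 <= n)%nat ->
    e i n = binom_exp n (p i false) (e false) + binom_exp n (p i false) (fun k => e true (n - k)%nat) + F i n).
  { intros i n Hn. unfold e.
    rewrite (be_lin3 n (p i false) (a false) L INR).
    rewrite (be_lin3 n (p i false) (fun k => a true (n - k)%nat) (fun k => L (n - k)%nat) (fun k => INR (n - k)%nat)).
    rewrite (be_refl n (p i false) L), be_mean. rewrite (Hrec i n Hn). unfold F, d. simpl.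
    destruct i.
    - rewrite HH in Hid1. replace (c true) with (K * - (p true false * ln (p true false) + (1 - p true false) * ln (1 - p true false)) - d0 * p true false) by lra.
      change (fun k => a false k) with (a false). ring.
    - rewrite HH in Hid0. replace (c false) with (K * - (p false false * ln (p false false) + (1 - p false false) * ln (1 - p false false)) - d0 * p false false + d0) by lra.
      change (fun k => a false k) with (a false). clearbody d0 K. ring. }
  destruct Heps as [alpha [Hal HB]].
  destruct (HB false) as [Kf [Nf HNf]]. destruct (HB true) as [Kt [Nt HNt]].
  set (be := Rmax alpha 0). set (ga := (be + 1) / 2).
  assert (Hbe0 : 0 <= be) by apply Rmax_r.
  assert (Hbe1 : be < 1) by (unfold be; apply Rmax_lub_lt; lra).
  assert (Hga : be < ga < 1) by (unfold ga; lra).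
  set (Ke := Rmax (Rmax Kf Kt) 0).
  assert (HKe : 0 <= Ke) by apply Rmax_r.
  set (N1 := max (max Nf Nt) 1).
  assert (Heb : forall i n, (N1 <= n)%nat -> Rabs (eps i n - c i * INR n) <= Ke * Rpower (INR n) be).
  { intros i n Hn.
    assert (Hn1 : 1 <= INR n) by (apply (le_INR 1); lia).
    assert (Hp : 0 < Rpower (INR n) alpha) by (unfold Rpower; apply exp_pos).
    assert (Hab : Rpower (INR n) alpha <= Rpower (INR n) be) by (apply Rle_Rpower; [lra|apply Rmax_l]).
    assert (HKK : forall Ki, Ki <= Rmax Kf Kt -> Ki * Rpower (INR n) alpha <= Ke * Rpower (INR n) be).
    { intros Ki HKi. pose proof (Rmax_l (Rmax Kf Kt) 0). fold Ke in H. nra. }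
    destruct i.
    - specialize (HNt n ltac:(lia)). rewrite (Rabs_right (Rpower _ _)) in HNt by lra.
      pose proof (HKK Kt (Rmax_r _ _)). lra.
    - specialize (HNf n ltac:(lia)). rewrite (Rabs_right (Rpower _ _)) in HNf by lra.
      pose proof (HKK Kf (Rmax_l _ _)). lra. }
  assert (HFb : forall i n, (N1 <= n)%nat -> Rabs (F i n) <= Ke * Rpower (INR n) be + 2 * Rabs K).
  { intros i n Hn. unfold F. pose proof (Heb i n Hn).
    pose proof (Fcore n (p i false) ltac:(lia) (Hq i)).
    match goal with |- Rabs (?x + K * ?y) <= _ =>
      pose proof (Rabs_triang x (K * y)); rewrite (Rabs_mult K y) in H1;
      assert (Rabs y <= 2) by (apply Rabs_le; lra) end.
    pose proof (Rabs_pos K). nra. }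
  set (del := fun i => Rpower (p i false) ga + Rpower (1 - p i false) ga - 1).
  assert (Hdel : forall i, 0 < del i).
  { intro i. unfold del, Rpower. pose proof (Hq i).
    assert (ln (p i false) < 0) by (rewrite <- ln_1; apply ln_increasing; lra).
    assert (ln (1 - p i false) < 0) by (rewrite <- ln_1; apply ln_increasing; lra).
    assert (exp (ln (p i false)) < exp (ga * ln (p i false))) by (apply exp_increasing; nra).
    assert (exp (ln (1 - p i false)) < exp (ga * ln (1 - p i false))) by (apply exp_increasing; nra).
    rewrite !exp_ln in * by lra. lra. }
  set (dl := Rmin (del false) (del true)).
  assert (Hdl : 0 < dl) by (unfold dl; apply Rmin_glb_lt; auto).
  assert (Hdli : forall i, dl <= del i) by (intro i; destruct i; unfold dl; [apply Rmin_r|apply Rmin_l]).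
  set (E0 := Rmax (Rabs (e false 0%nat)) (Rabs (e true 0%nat))).
  assert (HE0 : 0 <= E0) by (unfold E0; pose proof (Rabs_pos (e false 0%nat)); pose proof (Rmax_l (Rabs (e false 0%nat)) (Rabs (e true 0%nat))); lra).
  set (T := 2 + 2 * E0 + 2 * Rabs K).
  destruct (growth dl T Ke be ga Hdl ltac:(unfold T; pose proof (Rabs_pos K); lra) HKe Hbe0 ltac:(lra)) as [N2 HN2].
  destruct (eventually_ge (Rmax (Rmax (/ p false false) (/ (1 - p false false))) (Rmax (/ p true false) (/ (1 - p true false))))) as [N3 HN3].
  set (N0 := max (max N2 N3) (max N1 2)).
  destruct (base_bound e N0) as [A0 [HA0 HA0b]].
  set (A := A0 + 1).
  set (g := fun k => A * INR k - psi ga k).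
  assert (Hmain : forall n k j, (1 <= k)%nat -> (k < n)%nat -> Rabs (e j k) <= g k).
  { induction n as [|n IH]; intros k j Hk1 Hkn; [lia|].
    destruct (Nat.lt_ge_cases k n) as [Hlt|Hge]; [apply IH; auto|].
    assert (k = n) by lia. subst k.
    destruct (Nat.lt_ge_cases n N0) as [HnN|HnN].
    - specialize (HA0b n j HnN). unfold g. pose proof (psi_le ga n ltac:(lra) Hk1).
      assert (1 <= INR n) by (apply (le_INR 1); lia).
      unfold A. nra.
    - assert (Hn2 : (2 <= n)%nat) by lia.
      assert (HnN1 : (N1 <= n)%nat) by lia.
      assert (Hn0 : 0 < INR n) by (apply lt_0_INR; lia).
      specialize (HN3 n ltac:(lia)).
      apply (step e (fun i => p i false) g F E0 n Hq Hn2 HE0).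
      + intro i. apply Hrece. lia.
      + intro j'. unfold g, psi. simpl INR. rewrite !Rmult_0_l, !Rmult_0_r.
        unfold E0. replace (0 - 0 + _) with E0 by (unfold E0; ring).
        destruct j'; [apply Rmax_r|apply Rmax_l].
      + intros k j' Hk Hkn'. apply IH; auto.
      + intro i.
        assert (Hgb : forall r, binom_exp n r g = A * (INR n * r) - binom_exp n r (psi ga)).
        { intro r. unfold g. transitivity (binom_exp n r (fun k => A * INR k + (-1) * psi ga k)).
          - apply be_ext; intros; ring.
          - rewrite be_plus, !be_scal, be_mean. ring. }
        rewrite !Hgb. pose proof (Hq i) as Hqi.
        assert (Hx1 : 1 <= INR n * p i false).
        { assert (/ p i false <= INR n).
          { destruct i; (eapply Rle_trans; [|apply HN3]).
            - eapply Rle_trans; [|apply Rmax_r]. apply Rmax_l.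
            - eapply Rle_trans; [|apply Rmax_l]. apply Rmax_l. }
          apply (Rmult_le_compat_r (p i false)) in H; [|lra]. rewrite Rinv_l in H; lra. }
        assert (Hx2 : 1 <= INR n * (1 - p i false)).
        { assert (/ (1 - p i false) <= INR n).
          { destruct i; (eapply Rle_trans; [|apply HN3]).
            - eapply Rle_trans; [|apply Rmax_r]. apply Rmax_r.
            - eapply Rle_trans; [|apply Rmax_l]. apply Rmax_r. }
          apply (Rmult_le_compat_r (1 - p i false)) in H; [|lra]. rewrite Rinv_l in H; lra. }
        pose proof (Epsi_lower n (p i false) ga ltac:(lia) Hqi ltac:(lra) Hx1) as P1.
        pose proof (Epsi_lower n (1 - p i false) ga ltac:(lia) ltac:(lra) ltac:(lra) Hx2) as P2.
        rewrite <- (Rpower_mult_distr (INR n) (p i false)) in P1 by lra.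
        rewrite <- (Rpower_mult_distr (INR n) (1 - p i false)) in P2 by lra.
        unfold g. rewrite (psi_n ga n) by lia.
        pose proof (HFb i n HnN1) as HF.
        pose proof (HN2 n ltac:(lia)) as HG.
        assert (HP : 0 < Rpower (INR n) ga) by (unfold Rpower; apply exp_pos).
        assert (dl * Rpower (INR n) ga <= del i * Rpower (INR n) ga) by (apply Rmult_le_compat_r; [lra|apply Hdli]).
        unfold del, T in *. nra. }
  exists (A + Rabs d0), 1%nat. intros n Hn.
  assert (Hn1 : 1 <= INR n) by (apply (le_INR 1); lia).
  rewrite (Rabs_right (INR n)) by lra.
  pose proof (Hmain (S n) n i0 Hn ltac:(lia)) as Hb.
  pose proof (psi_le ga n ltac:(lra) Hn) as Hps.
  assert (Hd : Rabs (d i0) <= Rabs d0) by (destruct i0; simpl; [rewrite Rabs_R0; apply Rabs_pos|lra]).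
  assert (Heq : a i0 n - K * INR n * ln (INR n) = e i0 n + d i0 * INR n) by (unfold e, L; ring).
  fold K. rewrite Heq.
  pose proof (Rabs_triang (e i0 n) (d i0 * INR n)).
  rewrite Rabs_mult, (Rabs_right (INR n)) in H by lra.
  unfold g in Hb. nra.
Qed.
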